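(* Let $(t_1,s_1),(t_2,s_2)\in\mathbb{C}^\times\times\mathbb{C}^\times$ with $t_1\ne t_2$ and $s_1\neq s_2$, let $X_1=A_2(t_1,s_1)$, $X_2=A_2(t_2,s_2)$, let $\varepsilon_0=\det(X_1)+\det(X_2)-\det(X_1+X_2)$, and let $f_n(z)=\sum_{k=0}^{\lfloor n/2\rfloor}(-1)^k\frac{n}{n-k}\binom{n-k}{k}z^{n-2k}$. Then for all $n\in\mathbb{N}$, $\bigl((X_1X_2)^n\bigr)^{-1}=f_n(\varepsilon_0)I_2-(X_1X_2)^n$ and $\bigl((X_2X_1)^n\bigr)^{-1}=f_n(\varepsilon_0)I_2-(X_2X_1)^n$.
   Context: $\mathbb{C}^\times=\mathbb{C}\setminus\{0\}$; $A_2(t,s)=\begin{pmatrix} t & s\\ \frac{1-t^2}{s} & -t\end{pmatrix}$; $I_2$ is the $2\times2$ identity matrix. *)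

(* Defs.v *)
From HB Require Import structures.
From mathcomp Require Import all_boot all_order all_algebra.
From mathcomp Require Import complex.
From mathcomp Require Import Rstruct.
From Stdlib Require Import Reals.
Set Implicit Arguments. Unset Strict Implicit. Unset Printing Implicit Defensive.
Import Order.TTheory GRing.Theory Num.Theory.
Local Open Scope ring_scope.

Definition CC : Type := (Rdefinitions.R)[i].

Definition A2 (t s : CC) : 'M[CC]_2 :=
  \matrix_(i < 2, j < 2)
    if i == 0 then (if j == 0 then t else s)
    else (if j == 0 then (1 - t ^+ 2) / s else - t).

(* f_n(z) = sum_{k=0}^{floor(n/2)} (-1)^k n/(n-k) binom(n-k,k) z^(n-2k).
   For n = 0 the term n/(n-k) is 0/0; we use the standard convention
   f_0 = 2 (Lucas / Dickson polynomial convention). *)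
Definition fpoly (n : nat) (z : CC) : CC :=
  if n == 0%N then 2 else
  \sum_(0 <= k < (n %/ 2).+1)
     (-1) ^+ k * (n%:R / (n - k)%:R) * ('C(n - k, k))%:R * z ^+ (n - 2 * k).

(* Main.v *)
Require Import Defs.
From HB Require Import structures.
From mathcomp Require Import all_boot all_order all_algebra.
From mathcomp Require Import complex.
From mathcomp Require Import Rstruct.
From mathcomp Require Import ring zify.
Import Order.TTheory GRing.Theory Num.Theory.
Local Open Scope ring_scope.
Section M2.
Variable F : fieldType.
Implicit Types A B : 'M[F]_2.

Lemma det2 A : \det A = A 0 0 * A 1 1 - A 0 1 * A 1 0.
Proof.
rewrite (expand_det_row _ 0) !big_ord_recl big_ord0 /cofactor !det_mx11 !mxE /=.
try (have -> : lift 0 (0 : 'I_1) = 1 :> 'I_2 by apply/val_inj).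
try (have -> : lift ord0 (0 : 'I_1) = 1 :> 'I_2 by apply/val_inj).
try (have -> : lift (lift ord0 ord0) (0 : 'I_1) = 0 :> 'I_2 by apply/val_inj).
try (have -> : lift ord0 ord0 = 1 :> 'I_2 by apply/val_inj).
try (have -> : lift (1:'I_2) (0 : 'I_1) = 0 :> 'I_2 by apply/val_inj).
rewrite /bump /= expr0 expr1 !mul1r addr0 mulN1r mulrN. reflexivity.
Qed.

Lemma o1 : lift ord0 ord0 = 1 :> 'I_2. Proof. by apply/val_inj. Qed.
Lemma o0 : ord0 = 0 :> 'I_2. Proof. by apply/val_inj. Qed.

Lemma tr2 A : \tr A = A 0 0 + A 1 1.
Proof. by rewrite /mxtrace !big_ord_recl big_ord0 addr0 /= o1 o0. Qed.

Lemma mul2 A B i j : (A *m B) i j = A i 0 * B 0 j + A i 1 * B 1 j.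
Proof. by rewrite mxE !big_ord_recl big_ord0 addr0 /= o1 o0. Qed.

Lemma ord2P (i : 'I_2) : i = 0 \/ i = 1.
Proof. case: i => [[|[|i]]] Hi //; [left|right]; exact/val_inj. Qed.

Lemma mx2_eq A B : A 0 0 = B 0 0 -> A 0 1 = B 0 1 -> A 1 0 = B 1 0 -> A 1 1 = B 1 1 -> A = B.
Proof.
move=> h1 h2 h3 h4; apply/matrixP => i j.
by case: (ord2P i) => ->; case: (ord2P j) => ->.
Qed.

Lemma inv_det1 A : \det A = 1 -> invmx A = \tr A *: 1%:M - A.
Proof.
move=> dA.
have H : A *m (\tr A *: 1%:M - A) = 1%:M.
  move: dA; rewrite det2 tr2 => dA.
  apply: mx2_eq; rewrite !mul2 !mxE /=;
    first [ring | (rewrite -[RHS]dA; ring)].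
have [uA _] := mulmx1_unit H.
by rewrite -[invmx A]mulmx1 -{1}H mulKmx.
Qed.

Lemma CH A : \det A = 1 -> A * A = \tr A *: A - 1.
Proof.
rewrite det2 tr2 => dA; rewrite -mulmxE.
apply: mx2_eq; rewrite !mul2 !mxE /=; first [ring | (rewrite -[X in _ - X]dA; ring)].
Qed.

Lemma detX A n : \det A = 1 -> \det (A ^+ n) = 1.
Proof.
move=> dA; elim: n => [|n IH]; first by rewrite expr0 det1.
by rewrite exprS detM dA IH mulr1.
Qed.

Lemma tr_rec A n : \det A = 1 -> \tr (A ^+ n.+2) = \tr A * \tr (A ^+ n.+1) - \tr (A ^+ n).
Proof.
move=> dA; rewrite exprSr exprSr -mulrA CH // mulrBr mulr1 -scalerAr -exprSr.
by rewrite raddfB /= mxtraceZ.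
Qed.

End M2.

Section Comb.
Variable F : numFieldType.
Variable z : F.

Definition T (n k : nat) : F := (-1) ^+ k * ('C(n - k, k))%:R * z ^+ (n - 2 * k).
Definition U n := \sum_(k < n.+1) T n k.
Definition W (n k : nat) : F :=
  (-1) ^+ k * (n%:R / (n - k)%:R) * ('C(n - k, k))%:R * z ^+ (n - 2 * k).

Lemma Tz n k : (n < 2 * k)%N -> T n k = 0.
Proof. by move=> h; rewrite /T bin_small ?mulr0 ?mul0r //; lia. Qed.

Lemma Trec n k : T n.+2 k.+1 = z * T n.+1 k.+1 - T n k.
Proof.
case: (ltnP n (2 * k)) => h.
  rewrite Tz ?Tz //; try lia. by rewrite mulr0 subr0.
have [m ->] : exists m, n = (2 * k + m)%N by exists (n - 2 * k)%N; lia.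
rewrite /T.
have -> : ((2 * k + m).+2 - k.+1 = k + m + 1)%N by lia.
have -> : ((2 * k + m).+2 - 2 * k.+1 = m)%N by lia.
have -> : ((2 * k + m) - k = k + m)%N by lia.
have -> : ((2 * k + m) - 2 * k = m)%N by lia.
have -> : ((2 * k + m).+1 - k.+1 = k + m)%N by lia.
case: m => [|m].
  by rewrite !addn0 addn1 binn (bin_small (ltnSn k)) binn exprS; ring.
have -> : ((2 * k + m.+1).+1 - 2 * k.+1 = m)%N by lia.
have -> : (k + m.+1 + 1 = (k + m.+1).+1)%N by lia.
rewrite binS natrD !exprS; ring.
Qed.

Lemma Urec n : U n.+2 = z * U n.+1 - U n.
Proof.
rewrite /U big_ord_recl [in RHS](big_ord_recl n.+1) /=.
have -> : \sum_(k < n.+1) T n k = \sum_(k < n.+2) T n k.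
  by rewrite [RHS]big_ord_recr /= (Tz n n.+1) ?addr0 //; lia.
have -> : \sum_(i < n.+1) T n.+1 (bump 0 i) = \sum_(i < n.+2) T n.+1 (bump 0 i).
  by rewrite [RHS]big_ord_recr /= (Tz n.+1 (bump 0 n.+1)) ?addr0 // /bump /=; lia.
have -> : \sum_(i < n.+2) T n.+2 (bump 0 i) = \sum_(i < n.+2) (z * T n.+1 (bump 0 i) - T n i).
  by apply: eq_bigr => i _; rewrite /bump /= add1n Trec.
rewrite big_split /= sumrN -mulr_sumr mulrDr.
have -> : T n.+2 0 = z * T n.+1 0 by rewrite /T !subn0 !bin0 exprS; ring.
by rewrite addrA.
Qed.

Definition fp n := if n == 0%N then 2 else \sum_(0 <= k < (n %/ 2).+1) W n k.

Lemma Wrec n k : W n.+2 k.+1 = T n.+2 k.+1 - T n k.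
Proof.
case: (ltnP n (2 * k)) => h.
  rewrite /W bin_small ?mulr0 ?mul0r; last lia.
  by rewrite Tz ?Tz ?subr0 //; lia.
have [m ->] : exists m, n = (2 * k + m)%N by exists (n - 2 * k)%N; lia.
rewrite /W /T.
have -> : ((2 * k + m).+2 - k.+1 = k + m + 1)%N by lia.
have -> : ((2 * k + m).+2 - 2 * k.+1 = m)%N by lia.
have -> : ((2 * k + m) - k = k + m)%N by lia.
have -> : ((2 * k + m) - 2 * k = m)%N by lia.
rewrite addn1.
have nz : ((k + m).+1%:R : F) != 0 by rewrite pnatr_eq0.
have e2 : ((2 * k + m).+2%:R : F) = (k + m).+1%:R + (k.+1)%:R.
  by rewrite -natrD; congr (_ %:R); lia.
have hb := mul_bin_diag (k + m).+1 k.
have hc0 : ('C(k + m, k)%:R : F) = (k.+1)%:R * 'C((k + m).+1, k.+1)%:R / (k + m).+1%:R.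
  apply: (mulIf nz); rewrite mulfVK // mulrC -!natrM; congr (_ %:R); exact: hb.
rewrite e2 hc0 !exprS; field; by rewrite addrC -natrD natr1 pnatr_eq0.
Qed.

Lemma fpU n : fp n.+2 = U n.+2 - U n.
Proof.
rewrite /fp /=.
have -> : \sum_(0 <= k < (n.+2 %/ 2).+1) W n.+2 k = \sum_(0 <= k < n.+3) W n.+2 k.
  rewrite [RHS](big_cat_nat (n := (n.+2 %/ 2).+1)) /=; [|lia|lia].
  rewrite [X in _ = _ + X]big1_seq ?addr0 // => k /andP[_].
  rewrite mem_index_iota => /andP[h1 h2].
  by rewrite /W bin_small ?mulr0 ?mul0r //; lia.
rewrite big_mkord big_ord_recl /U (big_ord_recl n.+2).
have -> : \sum_(k < n.+1) T n k = \sum_(k < n.+2) T n k.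
  by rewrite [RHS]big_ord_recr /= (Tz n n.+1) ?addr0 //; lia.
have -> : \sum_(i < n.+2) W n.+2 (lift ord0 i) = \sum_(i < n.+2) (T n.+2 (lift ord0 i) - T n i).
  by apply: eq_bigr => i _; rewrite /= /bump /= add1n Wrec.
rewrite big_split /= sumrN.
have -> : W n.+2 0 = T n.+2 0 by rewrite /W /T !subn0 divff ?mulr1 // pnatr_eq0.
by rewrite addrA.
Qed.

Lemma fp0 : fp 0 = 2. Proof. by []. Qed.
Lemma fp1 : fp 1 = z.
Proof. rewrite /fp /= big_nat1 /W /= ?subn0 ?muln0 ?subn0 bin0 expr0 expr1; by field. Qed.
Lemma U0 : U 0 = 1.
Proof. rewrite /U big_ord1 /T /= ?subn0 ?muln0 ?subn0 bin0 !expr0. by rewrite ?mulr1n ?mul1r. Qed.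
Lemma U1 : U 1 = z.
Proof. rewrite /U !big_ord_recl big_ord0 /T /bump /= ?subn0 ?muln0 ?subn0 bin0 subnn bin0n expr0 expr1. have -> : bump 0 0 = 1%N by []. rewrite /= mulr0n mulr0 mul0r addr0. ring. Qed.

Lemma fp_rec n : fp n.+2 = z * fp n.+1 - fp n.
Proof.
case: n => [|[|n]].
- by rewrite fpU Urec fp1 fp0 U1 U0; ring.
- by rewrite !fpU fp1 Urec U0 U1; ring.
- rewrite !fpU Urec (Urec n.+1) (Urec n); ring.
Qed.

End Comb.

Lemma tr_fp (F : numFieldType) (A : 'M[F]_2) : \det A = 1 ->
  forall n, \tr (A ^+ n) = fp _ (\tr A) n.
Proof.
move=> dA.
suff H : forall n, \tr (A ^+ n) = fp _ (\tr A) n /\ \tr (A ^+ n.+1) = fp _ (\tr A) n.+1.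
  by move=> n; case: (H n).
elim=> [|n [IH1 IH2]].
  by rewrite expr0 expr1 mxtrace1 fp0 fp1.
by split=> //; rewrite tr_rec // fp_rec IH1 IH2.
Qed.

Lemma detA2 t s : s != 0 -> \det (A2 t s) = -1.
Proof. move=> hs; rewrite det2 !mxE /=; field; exact: hs. Qed.

Lemma epsA2 t1 s1 t2 s2 : s1 != 0 -> s2 != 0 ->
  \det (A2 t1 s1) + \det (A2 t2 s2) - \det (A2 t1 s1 + A2 t2 s2) = \tr (A2 t1 s1 *m A2 t2 s2).
Proof. move=> h1 h2; rewrite !det2 tr2 !mul2 !mxE /=; field; by rewrite h1 h2. Qed.

Lemma fp_eq (z : CC) n : fp _ z n = fpoly n z.
Proof. rewrite /fp /fpoly. by case: (n == 0%N). Qed.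

Lemma key (M : 'M[CC]_2) (e : CC) n : \det M = 1 -> \tr M = e ->
  invmx (M ^+ n) = fpoly n e *: 1%:M - M ^+ n.
Proof.
move=> dM tM; by rewrite inv_det1 ?detX // tr_fp // tM fp_eq.
Qed.

Theorem mainTheorem11 (t1 s1 t2 s2 : CC)
  (ht1 : t1 != 0) (hs1 : s1 != 0) (ht2 : t2 != 0) (hs2 : s2 != 0)
  (ht : t1 != t2) (hs : s1 != s2) (n : nat) :
  let X1 := A2 t1 s1 in
  let X2 := A2 t2 s2 in
  let eps0 := \det X1 + \det X2 - \det (X1 + X2) in
  invmx ((X1 *m X2) ^+ n) = fpoly n eps0 *: 1%:M - (X1 *m X2) ^+ n /\
  invmx ((X2 *m X1) ^+ n) = fpoly n eps0 *: 1%:M - (X2 *m X1) ^+ n.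
Proof.
move=> X1 X2 eps0.
have e : eps0 = \tr (X1 *m X2) by rewrite /eps0 epsA2.
have d12 : \det (X1 *m X2) = 1 by rewrite det_mulmx !detA2 // mulrNN mulr1.
have d21 : \det (X2 *m X1) = 1 by rewrite det_mulmx !detA2 // mulrNN mulr1.
split; apply: key => //.
by rewrite mxtrace_mulC.
Qed.
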